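(* For each $\theta\in C_h$ there exist exactly two primitive Eisenstein triples, of the form $(a,b,c)$ and $(b-a,b,c)$, such that $$\cos\theta = \frac{|b-2a|}{2c} = \frac{|b-2(b-a)|}{2c}.$$ Conversely, for each primitive Eisenstein triple $(a,b,c)$ there exists a unique $\theta\in C_h$ (hence a unique similarity class $C_h(\theta)$) satisfying this equation.
   Context: $\Lambda_h = \begin{bmatrix} 1 & -1/2 \\ 0 & \sqrt3/2\end{bmatrix}\mathbb{Z}^2$. A full-rank lattice $\Gamma\subset\mathbb{R}^2$ is well-rounded (WR) if it has a basis of vectors of minimal nonzero norm; such a basis can be chosen with angle in $[\pi/3,\pi/2]$ between its vectors, and this angle $\theta(\Gamma)$ is an invariant of $\Gamma$. $\mathrm{WR}(\Lambda_h)$ is the set of full-rank WR sublattices of $\Lambda_h$; $C_h = \{\theta\in[\pi/3,\pi/2] : \theta=\theta(\Gamma)\text{ for some }\Gamma\in\mathrm{WR}(\Lambda_h)\}$ and $C_h(\theta)=\{\Omega\in\mathrm{WR}(\Lambda_h):\theta(\Omega)=\theta\}$. An Eisenstein triple is $(a,b,c)\in\mathbb{Z}^3_{\ge0}\setminus\{0\}$ with $a^2-ab+b^2=c^2$; it is primitive if $a\le b$ and $\gcd(a,b,c)=1$. *)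

(* Defs.v *)
From Stdlib Require Import Reals ZArith Lra.
Open Scope R_scope.

Definition vec := (R * R)%type.
Definition vadd (u v : vec) : vec := (fst u + fst v, snd u + snd v).
Definition vscal (k : R) (u : vec) : vec := (k * fst u, k * snd u).
Definition dot (u v : vec) : R := fst u * fst v + snd u * snd v.
Definition vnorm (u : vec) : R := sqrt (dot u u).
Definition vzero : vec := (0, 0).

Definition lin_indep (u v : vec) : Prop := fst u * snd v - snd u * fst v <> 0.

Definition lattice_gen (u v : vec) (p : vec) : Prop :=
  exists x y : Z, p = vadd (vscal (IZR x) u) (vscal (IZR y) v).

Definition is_basis (Gamma : vec -> Prop) (u v : vec) : Prop :=
  lin_indep u v /\ forall p, Gamma p <-> lattice_gen u v p.

Definition Lambda_h (p : vec) : Prop :=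
  exists m n : Z, p = (IZR m - IZR n / 2, IZR n * sqrt 3 / 2).

Definition full_sublattice_h (Gamma : vec -> Prop) : Prop :=
  (exists u v, is_basis Gamma u v) /\ (forall p, Gamma p -> Lambda_h p).

Definition is_minimal (Gamma : vec -> Prop) (u : vec) : Prop :=
  Gamma u /\ u <> vzero /\ forall p, Gamma p -> p <> vzero -> vnorm u <= vnorm p.

Definition well_rounded (Gamma : vec -> Prop) : Prop :=
  exists u v, is_basis Gamma u v /\ is_minimal Gamma u /\ is_minimal Gamma v.

Definition angle (u v : vec) : R := acos (dot u v / (vnorm u * vnorm v)).

Definition theta_of (Gamma : vec -> Prop) (theta : R) : Prop :=
  exists u v, is_basis Gamma u v /\ is_minimal Gamma u /\ is_minimal Gamma v /\
    angle u v = theta /\ PI / 3 <= theta <= PI / 2.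

Definition C_h (theta : R) : Prop :=
  PI / 3 <= theta <= PI / 2 /\
  exists Gamma, full_sublattice_h Gamma /\ well_rounded Gamma /\ theta_of Gamma theta.

Definition eisenstein_triple (a b c : Z) : Prop :=
  (0 <= a)%Z /\ (0 <= b)%Z /\ (0 <= c)%Z /\ ~ (a = 0 /\ b = 0 /\ c = 0)%Z /\
  (a * a - a * b + b * b = c * c)%Z.

Definition primitive_eisenstein (a b c : Z) : Prop :=
  eisenstein_triple a b c /\ (a <= b)%Z /\ Z.gcd (Z.gcd a b) c = 1%Z.

(* Main.v *)
Require Import Defs.
From Stdlib Require Import Reals ZArith Lra Lia Znumtheory.
Open Scope R_scope.

Lemma eis_c_pos a b c : eisenstein_triple a b c -> (0 < c)%Z.
Proof.
  intros [Ha [Hb [Hc [Hnz He]]]].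
  destruct (Z.eq_dec c 0) as [->|]; [|lia].
  exfalso. apply Hnz. assert (a = 0 /\ b = 0)%Z by nia. lia.
Qed.

Lemma prim_b_ne_2a a b c : primitive_eisenstein a b c -> b <> (2 * a)%Z.
Proof.
  intros [[Ha [Hb [Hc [Hnz He]]]] [Hab Hg]] Hb2. subst b.
  assert (E : (c * c = 3 * (a * a))%Z) by nia.
  assert (H3c : (3 | c)%Z).
  { destruct (prime_mult 3 prime_3 c c) as [h|h]; auto. rewrite E. exists (a*a)%Z; ring. }
  destruct H3c as [d Hd]. subst c.
  assert (E2 : (a * a = 3 * (d * d))%Z) by nia.
  assert (H3a : (3 | a)%Z).
  { destruct (prime_mult 3 prime_3 a a) as [h|h]; auto. rewrite E2. exists (d*d)%Z; ring. }
  assert (H : (3 | Z.gcd (Z.gcd a (2 * a)) (d * 3))%Z).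
  { apply Z.gcd_greatest; [apply Z.gcd_greatest|].
    - exact H3a.
    - apply Z.divide_mul_r. exact H3a.
    - exists d; ring. }
  rewrite Hg in H. destruct H as [q Hq]. lia.
Qed.

Lemma prim_swap a b c : primitive_eisenstein a b c -> primitive_eisenstein (b - a) b c.
Proof.
  intros [[Ha [Hb [Hc [Hnz He]]]] [Hab Hg]].
  split; [split; [lia|split;[lia|split;[lia|split]]]|split].
  - intros [h1 [h2 h3]]. apply Hnz; lia.
  - nia.
  - lia.
  - rewrite Z.gcd_comm in Hg |- *.
    replace (Z.gcd (b - a) b) with (Z.gcd a b); auto.
    rewrite (Z.gcd_comm (b-a) b).
    replace (b - a)%Z with (- (a - b))%Z by ring. rewrite Z.gcd_opp_r.
    rewrite Z.gcd_sub_diag_r. apply Z.gcd_comm.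
Qed.

Lemma prop_eq a b c a' b' c' :
  primitive_eisenstein a b c -> primitive_eisenstein a' b' c' ->
  (a * c' = a' * c)%Z -> (b * c' = b' * c)%Z -> (a', b', c') = (a, b, c).
Proof.
  intros P P' E1 E2.
  pose proof (eis_c_pos _ _ _ (proj1 P)) as Hc.
  pose proof (eis_c_pos _ _ _ (proj1 P')) as Hc'.
  destruct P as [_ [_ Hg]]. destruct P' as [_ [_ Hg']].
  assert (G1 : Z.gcd (Z.gcd (a * c') (b * c')) (c * c') = c').
  { rewrite Z.gcd_mul_mono_r, (Z.abs_eq c') by lia. rewrite Z.gcd_mul_mono_r, Hg. lia. }
  assert (G2 : Z.gcd (Z.gcd (a' * c) (b' * c)) (c' * c) = c).
  { rewrite Z.gcd_mul_mono_r, (Z.abs_eq c) by lia. rewrite Z.gcd_mul_mono_r, Hg'. lia. }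
  rewrite E1, E2, (Z.mul_comm c c'), G2 in G1. subst c'.
  assert (a' = a) by nia. assert (b' = b) by nia. subst; reflexivity.
Qed.

Lemma uniq_Z a b c a' b' c' :
  primitive_eisenstein a b c -> primitive_eisenstein a' b' c' ->
  (Z.abs (b - 2 * a) * c' = Z.abs (b' - 2 * a') * c)%Z ->
  (a', b', c') = (a, b, c) \/ (a', b', c') = ((b - a)%Z, b, c).
Proof.
  intros P P' E.
  pose proof (eis_c_pos _ _ _ (proj1 P)) as Hc.
  pose proof (eis_c_pos _ _ _ (proj1 P')) as Hc'.
  pose proof P as [[Ha [Hb [_ [_ He]]]] _].
  pose proof P' as [[Ha' [Hb' [_ [_ He']]]] _].
  set (x := (b - 2 * a)%Z) in *. set (x' := (b' - 2 * a')%Z) in *.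
  assert (Q : (x * x * (c' * c') = x' * x' * (c * c))%Z).
  { assert (Z.abs x * Z.abs x = x * x)%Z by (destruct (Z.abs_eq_or_opp x) as [h|h]; rewrite h; ring).
    assert (Z.abs x' * Z.abs x' = x' * x')%Z by (destruct (Z.abs_eq_or_opp x') as [h|h]; rewrite h; ring).
    assert (S : (Z.abs x * c' * (Z.abs x * c') = Z.abs x' * c * (Z.abs x' * c))%Z) by (rewrite E; ring).
    rewrite <- H, <- H0.
    transitivity (Z.abs x * c' * (Z.abs x * c'))%Z. ring. rewrite S; ring. }
  assert (F : (4 * (c * c) = x * x + 3 * (b * b))%Z) by (unfold x; nia).
  assert (F' : (4 * (c' * c') = x' * x' + 3 * (b' * b'))%Z) by (unfold x'; nia).
  assert (B2 : ((b * c') * (b * c') = (b' * c) * (b' * c))%Z) by nia.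
  assert (B : (b * c' = b' * c)%Z).
  { assert (0 <= b * c')%Z by nia. assert (0 <= b' * c)%Z by nia. nia. }
  destruct (Z.abs_eq_or_opp x) as [h|h]; destruct (Z.abs_eq_or_opp x') as [h'|h'];
    rewrite h, h' in E.
  - left. apply prop_eq; auto. unfold x, x' in E. nia.
  - right. apply prop_eq; auto. apply prim_swap; auto. unfold x, x' in E. nia.
  - right. apply prop_eq; auto. apply prim_swap; auto. unfold x, x' in E. nia.
  - left. apply prop_eq; auto. unfold x, x' in E. nia.
Qed.

Lemma reduce a0 b0 c0 : (0 <= a0)%Z -> (a0 <= b0)%Z -> (0 < c0)%Z ->
  (a0 * a0 - a0 * b0 + b0 * b0 = c0 * c0)%Z ->
  exists a b c g, (0 < g)%Z /\ a0 = (a * g)%Z /\ b0 = (b * g)%Z /\ c0 = (c * g)%Z /\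
    primitive_eisenstein a b c.
Proof.
  intros Ha Hab Hc E.
  set (g := Z.gcd (Z.gcd a0 b0) c0).
  assert (Hg : (0 < g)%Z).
  { assert (0 <= g)%Z by apply Z.gcd_nonneg.
    destruct (Z.eq_dec g 0) as [h|]; [|lia].
    apply Z.gcd_eq_0 in h. lia. }
  assert (Da : (g | a0)%Z) by (eapply Z.divide_trans; [apply Z.gcd_divide_l|apply Z.gcd_divide_l]).
  assert (Db : (g | b0)%Z) by (eapply Z.divide_trans; [apply Z.gcd_divide_l|apply Z.gcd_divide_r]).
  assert (Dc : (g | c0)%Z) by apply Z.gcd_divide_r.
  destruct Da as [a Ea]. destruct Db as [b Eb]. destruct Dc as [c Ec].
  exists a, b, c, g. split; [lia|split;[auto|split;[auto|split;[auto|]]]].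
  assert (G : g = (g * Z.gcd (Z.gcd a b) c)%Z).
  { unfold g at 1. rewrite Ea, Eb, Ec, Z.gcd_mul_mono_r, (Z.abs_eq g) by lia.
    rewrite Z.gcd_mul_mono_r. lia. }
  clearbody g. subst a0 b0 c0.
  split; [split; [nia|split;[nia|split;[nia|split]]]|split].
  - intros [h1 [h2 h3]]. subst. lia.
  - assert (g * g * (a * a - a * b + b * b) = g * g * (c * c))%Z by nia.
    apply Z.mul_reg_l in H; nia.
  - nia.
  - nia.
Qed.

Definition lh (m n : Z) : vec := (IZR m - IZR n / 2, IZR n * sqrt 3 / 2).

Lemma s3 : sqrt 3 * sqrt 3 = 3.
Proof. apply sqrt_sqrt; lra. Qed.
Lemma s3pos : 0 < sqrt 3.
Proof. apply sqrt_lt_R0; lra. Qed.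

Lemma sq3 t : (t * sqrt 3) * (t * sqrt 3) = 3 * (t * t).
Proof. replace ((t * sqrt 3) * (t * sqrt 3)) with (t * t * (sqrt 3 * sqrt 3)) by ring. rewrite s3; ring. Qed.

Lemma dot_lh m1 n1 m2 n2 :
  dot (lh m1 n1) (lh m2 n2) = IZR (2*m1*m2 + 2*n1*n2 - m1*n2 - n1*m2) / 2.
Proof.
  unfold dot, lh; cbn [fst snd]. rewrite !minus_IZR, !plus_IZR, !mult_IZR.
  replace (IZR n1 * sqrt 3 / 2 * (IZR n2 * sqrt 3 / 2)) with
    (IZR n1 * IZR n2 / 4 * (sqrt 3 * sqrt 3)) by field.
  rewrite s3. field.
Qed.

Lemma angle_range q : 0 <= q <= 1/2 -> PI/3 <= acos q <= PI/2.
Proof.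
  intros Hq. pose proof (acos_bound q). pose proof PI_RGT_0.
  assert (Hc : cos (acos q) = q) by (apply cos_acos; lra).
  split.
  - destruct (Rle_or_lt (PI/3) (acos q)) as [h|h]; auto.
    pose proof (cos_decreasing_1 (acos q) (PI/3)) as D. rewrite cos_PI3, Hc in D.
    assert (q > 1/2) by (apply D; lra). lra.
  - destruct (Rle_or_lt (acos q) (PI/2)) as [h|h]; auto.
    pose proof (cos_lt_0 (acos q)) as D. rewrite Hc in D. assert (q < 0) by (apply D; lra). lra.
Qed.

Lemma cos_range t : PI/3 <= t <= PI/2 -> 0 <= cos t <= 1/2.
Proof.
  intros H. pose proof PI_RGT_0. split.
  - apply cos_ge_0; lra.
  - destruct (Req_dec t (PI/3)) as [->|h]. rewrite cos_PI3; lra.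
    pose proof (cos_decreasing_1 (PI/3) t) as D. rewrite cos_PI3 in D.
    assert (cos t < 1/2) by (apply D; lra). lra.
Qed.

Lemma Zsq_ge1 x y : (x, y) <> (0%Z, 0%Z) -> (1 <= x*x + y*y)%Z.
Proof. intros H. destruct (Z.eq_dec x 0); destruct (Z.eq_dec y 0); subst; try congruence; nia. Qed.

Lemma Zsq_ge1' x y : (x*y < 0)%Z -> (1 <= x*x + y*y + x*y)%Z.
Proof. intros. nia. Qed.

Lemma exist_Ch (m n c : Z) : (0 < c)%Z -> (m*m - m*n + n*n = c*c)%Z -> n <> 0%Z ->
  (0 <= 2*m - n)%Z -> ((2*m-n)*(2*m-n) <= c*c)%Z ->
  C_h (acos (IZR (2*m - n) / (2 * IZR c))).
Proof.
  intros Hc E Hn H0 H1.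
  assert (H2 : (2*m - n <= c)%Z) by nia.
  set (C := IZR c). set (q := IZR (2*m-n) / (2*C)).
  assert (HC : 0 < C) by (apply IZR_lt; auto).
  assert (Hq : 0 <= q <= 1/2).
  { unfold q. apply IZR_le in H0. apply IZR_le in H2. fold C in H2. split.
    apply Rmult_le_pos; [lra|]. left; apply Rinv_0_lt_compat; lra.
    apply Rmult_le_reg_r with (2*C); [lra|]. field_simplify; lra. }
  pose proof (angle_range q Hq) as Hr.
  split; [exact Hr|].
  set (u := (C, 0) : vec). set (v := lh m n).
  set (Gamma := lattice_gen u v).
  assert (Huu : dot u u = C * C) by (unfold u, dot; cbn [fst snd]; ring).
  assert (Hvv : dot v v = C * C).
  { unfold v. rewrite dot_lh. unfold C. rewrite <- mult_IZR, <- E.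
    repeat rewrite ?minus_IZR, ?plus_IZR, ?mult_IZR. field. }
  assert (Huv : dot u v = C * C * q).
  { unfold u, v, lh, dot, q; cbn [fst snd]. rewrite minus_IZR, mult_IZR. field. lra. }
  assert (Hnorm : vnorm u = C /\ vnorm v = C).
  { unfold vnorm. rewrite Huu, Hvv, sqrt_square; lra. }
  assert (Hli : lin_indep u v).
  { unfold lin_indep, u, v, lh; cbn [fst snd]. pose proof s3pos.
    assert (IZR n <> 0) by (apply not_0_IZR; auto).
    intro h. assert (K : C * (IZR n * sqrt 3) = 0) by lra.
    apply Rmult_integral in K. destruct K as [K|K]; [lra|].
    apply Rmult_integral in K. destruct K; lra. }
  assert (Hdot : forall x y : Z, dot (vadd (vscal (IZR x) u) (vscal (IZR y) v))
                                    (vadd (vscal (IZR x) u) (vscal (IZR y) v)) =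
     C*C*(IZR x * IZR x + IZR y * IZR y) + 2 * IZR x * IZR y * (C*C*q)).
  { intros x y. transitivity (IZR x * IZR x * dot u u + IZR y * IZR y * dot v v + 2 * IZR x * IZR y * dot u v).
    unfold dot, vadd, vscal; cbn [fst snd]. ring. rewrite Huu, Hvv, Huv. ring. }
  assert (Hmin : forall p, Gamma p -> p <> vzero -> C * C <= dot p p).
  { intros p [x [y ->]] Hp. rewrite Hdot.
    assert (Hxy : (x, y) <> (0%Z, 0%Z)).
    { intro h. inversion h; subst. apply Hp. unfold vzero, vadd, vscal; cbn [fst snd]. f_equal; ring. }
    pose proof (Zsq_ge1 x y Hxy) as G. apply IZR_le in G.
    rewrite plus_IZR, !mult_IZR in G.
    assert (0 <= C*C) by nra.
    destruct (Z_lt_le_dec (x*y) 0) as [hl|hl].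
    - pose proof (Zsq_ge1' x y hl) as G'. apply IZR_le in G'. rewrite !plus_IZR, !mult_IZR in G'.
      apply IZR_lt in hl. rewrite mult_IZR in hl.
      assert (Q : C*C*q <= C*C*(1/2)) by (apply Rmult_le_compat_l; lra).
      assert (IZR x * IZR y * (C*C*q) >= IZR x * IZR y * (C*C) / 2).
      { set (P := IZR x * IZR y) in *. set (Q' := C*C*q) in *. nra. }
      nra.
    - apply IZR_le in hl. rewrite mult_IZR in hl.
      assert (0 <= IZR x * IZR y * (C*C*q)).
      { apply Rmult_le_pos; [lra|]. apply Rmult_le_pos; lra. }
      nra. }
  assert (Hminv : forall p, Gamma p -> p <> vzero -> C <= vnorm p).
  { intros p Gp Hp. unfold vnorm. rewrite <- (sqrt_square C) by lra.
    apply sqrt_le_1_alt. apply Hmin; auto. }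
  assert (Hbasis : is_basis Gamma u v) by (split; [exact Hli| intros; tauto]).
  assert (Gu : Gamma u).
  { exists 1%Z, 0%Z. unfold u, vadd, vscal; cbn [fst snd]. f_equal; ring. }
  assert (Gv : Gamma v).
  { exists 0%Z, 1%Z. destruct v as [v1 v2]. unfold vadd, vscal; cbn [fst snd]. f_equal; ring. }
  assert (Mu : is_minimal Gamma u).
  { split; [exact Gu|split].
    - unfold u, vzero. intro h; inversion h; lra.
    - intros p Gp Hp. destruct Hnorm as [-> _]. apply Hminv; auto. }
  assert (Mv : is_minimal Gamma v).
  { split; [exact Gv|split].
    - unfold v, lh, vzero. intro h; inversion h. pose proof s3pos.
      assert (IZR n <> 0) by (apply not_0_IZR; auto).
      assert (K : IZR n * sqrt 3 = 0) by lra. apply Rmult_integral in K; destruct K; lra.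
    - intros p Gp Hp. destruct Hnorm as [_ ->]. apply Hminv; auto. }
  exists Gamma. split; [|split].
  - split. exists u, v; exact Hbasis.
    intros p [x [y ->]]. exists (x * c + y * m)%Z, (y * n)%Z.
    unfold u, v, lh, vadd, vscal, C; cbn [fst snd]. rewrite plus_IZR, !mult_IZR. f_equal; field.
  - exists u, v. auto.
  - exists u, v. split; [auto|split;[auto|split;[auto|split]]]; [|exact Hr].
    unfold angle. destruct Hnorm as [-> ->]. rewrite Huv. f_equal. field. lra.
Qed.

Lemma norm_lh m n : dot (lh m n) (lh m n) = IZR (m*m - m*n + n*n).
Proof.
  rewrite dot_lh. replace (2*m*m + 2*n*n - m*n - n*m)%Z with (2 * (m*m - m*n + n*n))%Z by ring.
  rewrite mult_IZR. field.
Qed.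

Lemma core1 r N b0 a0 : (0 < N)%Z -> (0 <= r <= N)%Z -> (2*a0 = b0 - r)%Z -> (0 <= b0)%Z ->
  (r*r + 3*(b0*b0) = 4*(N*N))%Z ->
  exists a b c g, (0 < g)%Z /\ r = (g * (b - 2*a))%Z /\ N = (c * g)%Z /\
    (0 <= b - 2*a)%Z /\ primitive_eisenstein a b c.
Proof.
  intros HN Hr E Hb F.
  assert (r <= b0)%Z by nia.
  destruct (reduce a0 b0 N) as [a [b [c [g [Hg [Ea [Eb [Ec P]]]]]]]]; try nia.
  exists a, b, c, g. split; [auto|split;[nia|split;[auto|split;[nia|auto]]]].
Qed.

Lemma part1_ex theta : C_h theta ->
  exists a b c, primitive_eisenstein a b c /\ (0 <= b - 2*a)%Z /\
    cos theta = IZR (b - 2*a) / (2 * IZR c).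
Proof.
  intros [Hr [Gamma [[_ Hsub] [_ [u [v [Hb [Mu [Mv [Ha _]]]]]]]]]].
  destruct (Hsub u (proj1 Mu)) as [m1 [n1 Eu]].
  destruct (Hsub v (proj1 Mv)) as [m2 [n2 Ev]].
  fold (lh m1 n1) in Eu. fold (lh m2 n2) in Ev.
  set (N1 := (m1*m1 - m1*n1 + n1*n1)%Z). set (N2 := (m2*m2 - m2*n2 + n2*n2)%Z).
  assert (Hn1 : vnorm u = sqrt (IZR N1)) by (unfold vnorm; rewrite Eu, norm_lh; reflexivity).
  assert (Hn2 : vnorm v = sqrt (IZR N2)) by (unfold vnorm; rewrite Ev, norm_lh; reflexivity).
  assert (L1 : vnorm u <= vnorm v) by (apply (proj2 (proj2 Mu)); [exact (proj1 Mv)|exact (proj1 (proj2 Mv))]).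
  assert (L2 : vnorm v <= vnorm u) by (apply (proj2 (proj2 Mv)); [exact (proj1 Mu)|exact (proj1 (proj2 Mu))]).
  assert (P1 : (0 <= N1)%Z) by (unfold N1; nia).
  assert (P2 : (0 <= N2)%Z) by (unfold N2; nia).
  assert (EN : N1 = N2).
  { apply eq_IZR. apply sqrt_inj; try (apply IZR_le; auto). rewrite <- Hn1, <- Hn2. lra. }
  assert (HN : (0 < N1)%Z).
  { destruct (Z.eq_dec N1 0) as [h|h]; [|lia]. exfalso. apply (proj1 (proj2 Mu)).
    unfold N1 in h. assert (m1 = 0 /\ n1 = 0)%Z as [-> ->] by nia.
    rewrite Eu. unfold lh, vzero. f_equal; lra. }
  set (r := (2*m1*m2 + 2*n1*n2 - m1*n2 - n1*m2)%Z).
  set (k := (m1*n2 - n1*m2)%Z).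
  assert (F : (r*r + 3*(k*k) = 4*(N1*N1))%Z).
  { rewrite EN at 2. unfold r, k, N1, N2. ring. }
  assert (Rb : (-(2*N1) <= r <= 2*N1)%Z) by nia.
  set (N := IZR N1).
  assert (HNr : 0 < N) by (apply IZR_lt; auto).
  assert (Ht : theta = acos (IZR r / (2 * N))).
  { rewrite <- Ha. unfold angle. rewrite Hn1, Hn2, <- EN, sqrt_sqrt by (apply IZR_le; auto).
    rewrite Eu, Ev, dot_lh. fold r. fold N. f_equal. field. lra. }
  assert (Hc : cos theta = IZR r / (2 * N)).
  { rewrite Ht. apply cos_acos. destruct Rb as [R1 R2]. apply IZR_le in R1. apply IZR_le in R2.
    rewrite opp_IZR, mult_IZR in R1. rewrite mult_IZR in R2. fold N in R1, R2.
    split; [apply Rmult_le_reg_r with (2*N)|apply Rmult_le_reg_r with (2*N)]; try lra;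
      field_simplify; lra. }
  pose proof (cos_range theta Hr) as [C1 C2]. rewrite Hc in C1, C2.
  assert (Hr0 : (0 <= r)%Z).
  { apply le_IZR. apply Rmult_le_reg_r with (/(2*N)). apply Rinv_0_lt_compat; lra.
    rewrite Rmult_0_l. exact C1. }
  assert (HrN : (r <= N1)%Z).
  { apply le_IZR. fold N. apply Rmult_le_reg_r with (/(2*N)). apply Rinv_0_lt_compat; lra.
    replace (N * / (2 * N)) with (1/2) by (field; lra). exact C2. }
  assert (Ea0 : exists a0, (2*a0 = Z.abs k - r)%Z).
  { destruct (Z_le_gt_dec 0 k).
    - exists (k - (m1*m2 + n1*n2 - n1*m2))%Z. rewrite Z.abs_eq by lia. unfold r, k. ring.
    - exists (-(m1*m2 + n1*n2 - n1*m2))%Z. rewrite Z.abs_neq by lia. unfold r, k. ring. }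
  destruct Ea0 as [a0 Ea0].
  assert (F' : (r*r + 3*(Z.abs k*Z.abs k) = 4*(N1*N1))%Z).
  { assert (Z.abs k * Z.abs k = k * k)%Z by (destruct (Z.abs_eq_or_opp k) as [h|h]; rewrite h; ring).
    rewrite H; exact F. }
  destruct (core1 r N1 (Z.abs k) a0) as [a [b [c [g [Hg [Er [Ec [Hx P]]]]]]]]; try lia; auto.
  exists a, b, c. split; [auto|split; [auto|]].
  rewrite Hc. unfold N. rewrite Er, Ec, !mult_IZR. field.
  pose proof (eis_c_pos _ _ _ (proj1 P)). split; apply not_0_IZR; lia.
Qed.

Lemma ratio_bounds z c : (0 <= z <= c)%Z -> (0 < c)%Z -> 0 <= IZR z / (2 * IZR c) <= 1/2.
Proof.
  intros [H1 H2] Hc. apply IZR_le in H1. apply IZR_le in H2. apply IZR_lt in Hc.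
  split. apply Rmult_le_pos; [lra|]. left; apply Rinv_0_lt_compat; lra.
  apply Rmult_le_reg_r with (2 * IZR c); [lra|]. field_simplify; lra.
Qed.

Theorem corollary4p6 :
  (forall theta : R, C_h theta ->
     exists a b c : Z,
       primitive_eisenstein a b c /\ primitive_eisenstein (b - a) b c /\
       (a, b, c) <> ((b - a)%Z, b, c) /\
       cos theta = Rabs (IZR (b - 2 * a)) / (2 * IZR c) /\
       cos theta = Rabs (IZR (b - 2 * (b - a))) / (2 * IZR c) /\
       (forall a' b' c' : Z, primitive_eisenstein a' b' c' ->
          cos theta = Rabs (IZR (b' - 2 * a')) / (2 * IZR c') ->
          (a', b', c') = (a, b, c) \/ (a', b', c') = ((b - a)%Z, b, c)))
  /\
  (forall a b c : Z, primitive_eisenstein a b c ->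
     exists! theta : R, C_h theta /\ cos theta = Rabs (IZR (b - 2 * a)) / (2 * IZR c)).
Proof.
  split.
  - intros theta H. destruct (part1_ex theta H) as [a [b [c [P [Hx Hc]]]]].
    pose proof (eis_c_pos _ _ _ (proj1 P)) as Hc0.
    assert (Ra : Rabs (IZR (b - 2*a)) = IZR (b - 2*a)).
    { apply Rabs_right. apply Rle_ge, IZR_le; auto. }
    exists a, b, c. split; [auto|split; [apply prim_swap; auto|split; [|split; [|split]]]].
    + intro h. injection h as h. apply (prim_b_ne_2a a b c P). lia.
    + rewrite Ra; auto.
    + replace (b - 2*(b-a))%Z with (-(b-2*a))%Z by ring. rewrite opp_IZR, Rabs_Ropp, Ra; auto.
    + intros a' b' c' P' Hc'. apply uniq_Z; auto.
      pose proof (eis_c_pos _ _ _ (proj1 P')) as Hc0'.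
      apply eq_IZR. rewrite !mult_IZR, <- !Rabs_Zabs, Ra.
      rewrite Hc in Hc'.
      assert (C1 : IZR c <> 0) by (apply not_0_IZR; lia).
      assert (C2 : IZR c' <> 0) by (apply not_0_IZR; lia).
      transitivity (IZR (b - 2*a) / (2 * IZR c) * (2 * IZR c * IZR c')). field; auto.
      rewrite Hc'. field; auto.
  - intros a b c P.
    pose proof (eis_c_pos _ _ _ (proj1 P)) as Hc0.
    pose proof P as [[Ha [Hb [_ [Hnz He]]]] [Hab _]].
    set (z := Z.abs (b - 2*a)).
    assert (Hz : (0 <= z <= c)%Z).
    { unfold z. split; [lia|]. assert (z*z <= c*c)%Z.
      { unfold z. destruct (Z.abs_eq_or_opp (b-2*a)) as [h|h]; rewrite h; nia. }
      nia. }
    assert (Hmn : exists m n, (2*m - n = z)%Z /\ n <> 0%Z /\ (m*m - m*n + n*n = c*c)%Z).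
    { assert (b <> 0%Z) by (intro; subst; assert (a = 0%Z) by lia; subst; lia).
      unfold z. destruct (Z_le_gt_dec (2*a) b).
      - exists (-a)%Z, (-b)%Z. rewrite Z.abs_eq by lia. split; [ring|split; [lia|nia]].
      - exists a, b. rewrite Z.abs_neq by lia. split; [ring|split; [lia|nia]]. }
    destruct Hmn as [m [n [Ez [Hn E]]]].
    assert (Hq : IZR z / (2 * IZR c) = Rabs (IZR (b - 2*a)) / (2 * IZR c)).
    { rewrite Rabs_Zabs. reflexivity. }
    pose proof (ratio_bounds z c Hz Hc0) as Hb'.
    exists (acos (IZR z / (2 * IZR c))). split.
    + split.
      * rewrite <- Ez. apply exist_Ch; auto; rewrite Ez; [lia|nia].
      * rewrite cos_acos by lra. exact Hq.
    + intros t [[Ht _] Hct]. rewrite <- Hq in Hct. rewrite <- Hct.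
      apply acos_cos. pose proof PI_RGT_0. lra.
Qed.
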